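(* Assume the standing hypotheses (H). Let $A$ be a part of $G$ with $|A|=3$, and let $L_A$ be the set of colors $c$ such that $c\in L(u)\cap L(v)$ for some good pair $\{u,v\}$ for $A$. Then $|L_A|\ge k_3+\frac{k_1+k_4}{3}$.
   Context: A list assignment $L$ assigns to each vertex $v$ a set $L(v)$ of colors; an $L$-coloring is a proper coloring $f$ with $f(v)\in L(v)$ for all $v$; $\mathrm{ch}$ denotes choice number and $\chi$ chromatic number. A part of a complete multipartite graph is one of its maximal stable sets. Standing hypotheses (H): $k\ge1$ and $n\ge 2k+2$ are integers; $G$ is a complete $k$-partite graph (exactly $k$ nonempty parts) on $n$ vertices; $L$ is a list assignment for $G$ with $|L(v)|\ge\lceil (n+k-1)/3\rceil$ for every vertex $v$; $G$ has no $L$-coloring; $\left|\bigcup_{v\in V(G)}L(v)\right|\le n-1$; and every graph $H$ with fewer than $n$ vertices satisfies $\mathrm{ch}(H)\le\max\{\chi(H),\lceil(|V(H)|+\chi(H)-1)/3\rceil\}$. For $i\in\{1,2,3,4\}$, $k_i$ denotes the number of parts of $G$ of size $i$. For a part $A$ with $|A|\ge3$, a pair $\{u,v\}\subseteq A$ of distinct vertices is a good pair for $A$ if either $|A|=3$ and $|L(u)\cap L(v)|\ge\frac{k_1+k_4+1}{3}$, or $|A|=4$ and $|L(u)\cap L(v)|\ge|L(w)\cap L(z)|$ where $\{w,z\}=A\setminus\{u,v\}$. *)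

(* Defs.v *)
From mathcomp Require Import all_boot.
Set Implicit Arguments. Unset Strict Implicit. Unset Printing Implicit Defensive.

Definition sadj (V : finType) (e : rel V) : rel V :=
  fun x y => (x != y) && (e x y || e y x).

Definition kcolb (V : finType) (e : rel V) (k : nat) : bool :=
  [exists f : {ffun V -> 'I_k},
     [forall x, [forall y, sadj e x y ==> (f x != f y)]]].

Lemma kcol_ex (V : finType) (e : rel V) : exists k, kcolb e k.
Proof.
exists #|V|; apply/existsP; exists [ffun x => enum_rank x].
apply/forallP => x; apply/forallP => y; apply/implyP => /andP [hxy _].
by rewrite !ffunE; apply: contra hxy => /eqP /enum_rank_inj ->.
Qed.

Definition chi (V : finType) (e : rel V) : nat := ex_minn (kcol_ex e).

Definition Lcoloring (V : finType) (e : rel V) (C : finType)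
  (L : V -> {set C}) (f : V -> C) : Prop :=
  (forall v, f v \in L v) /\ (forall x y, sadj e x y -> f x != f y).

Definition choosable (V : finType) (e : rel V) (m : nat) : Prop :=
  forall (C : finType) (L : V -> {set C}),
    (forall v, m <= #|L v|) -> exists f : V -> C, Lcoloring e L f.

Definition ceil3 (a : nat) : nat := (a + 2) %/ 3.

Definition kpart_adj (V : finType) (k : nat) (p : V -> 'I_k) : rel V :=
  fun x y => p x != p y.

Definition partset (V : finType) (k : nat) (p : V -> 'I_k) (i : 'I_k) : {set V} :=
  [set v | p v == i].

Definition kcount (V : finType) (k : nat) (p : V -> 'I_k) (s : nat) : nat :=
  #|[set j : 'I_k | #|partset p j| == s]|.

Definition good_pair (V : finType) (k : nat) (p : V -> 'I_k) (C : finType)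
  (L : V -> {set C}) (u v : V) : bool :=
  let A := partset p (p u) in
  [&& u != v, p u == p v &
   ((#|A| == 3) && (kcount p 1 + kcount p 4 + 1 <= 3 * #|L u :&: L v|))
   || ((#|A| == 4) &&
       [forall w, [forall z,
          [&& w != z, w \in A :\: [set u; v] & z \in A :\: [set u; v]]
          ==> (#|L w :&: L z| <= #|L u :&: L v|)]])].

Definition LA (V : finType) (k : nat) (p : V -> 'I_k) (C : finType)
  (L : V -> {set C}) (a : 'I_k) : {set C} :=
  [set c | [exists u, [exists v,
      [&& u \in partset p a, v \in partset p a, good_pair p L u v
        & c \in L u :&: L v]]]].

(* Main.v *)
Require Import Defs.
From mathcomp Require Import all_boot.
From mathcomp Require Import zify.

Lemma chi_le (W : finType) (e : rel W) k : kcolb e k -> chi e <= k.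
Proof. rewrite /chi; case: ex_minnP => m _ hm; exact: hm. Qed.

Lemma no_triple (k n : nat) (V : finType) (p : V -> 'I_k)
  (C : finType) (L : V -> {set C})
  (hk : 1 <= k) (hn : 2 * k + 2 <= n) (hV : #|V| = n)
  (hL : forall v, ceil3 (n + k - 1) <= #|L v|)
  (hnocol : ~ exists f : V -> C, Lcoloring (kpart_adj p) L f)
  (hmin : forall (W : finType) (e : rel W), #|W| < n ->
     choosable e (maxn (chi e) (ceil3 (#|W| + chi e - 1))))
  (a : 'I_k) (hA : #|partset p a| = 3) (c : C)
  (hc : forall v, p v = a -> c \in L v) : False.
Proof.
pose W : finType := {v : V | p v != a}.
pose e : rel W := fun u w => p (val u) != p (val w).
have hW : #|W| = n - 3.
  rewrite card_sig -hV -(cardsC (partset p a)) hA.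
  have -> : #|[pred x | p x != a]| = #|~: partset p a|.
    by apply: eq_card => v; rewrite !inE.
  lia.
have hchi : chi e <= k.
  apply: chi_le; apply/existsP; exists [ffun w : W => p (val w)].
  apply/forallP => u; apply/forallP => w; apply/implyP => /andP [_ /orP [h|h]].
    by rewrite !ffunE.
  by rewrite !ffunE eq_sym.
have hlt : #|W| < n by lia.
have hsz : forall w : W, maxn (chi e) (ceil3 (#|W| + chi e - 1)) <= #|L (val w) :\ c|.
  move=> w; rewrite hW; have := hL (val w); rewrite (cardsD1 c (L (val w))) /ceil3.
  move: (c \in L (val w)) => b; case: b => /=; lia.
have [f' [hf1 hf2]] := hmin W e hlt C (fun w => L (val w) :\ c) hsz.
  apply: hnocol.
  exists (fun v => if insub v is Some w then f' w else c); split.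
  - move=> v; case: insubP => [w _ hvw|hv].
      by have := hf1 w; rewrite inE -hvw => /andP [].
    by apply: hc; move: hv; rewrite negbK => /eqP.
  - move=> x y /andP [hxy hxy'].
    have pxy : p x != p y by case/orP: hxy' => // h; rewrite eq_sym.
    case: insubP => [w1 hw1 hx|hx]; case: insubP => [w2 hw2 hy|hy].
    + apply: hf2; apply/andP; split.
        by apply: contra hxy => /eqP h; rewrite -hx -hy h.
      by rewrite /e hx hy pxy.
    + move: hy; rewrite negbK => /eqP hy.
      by have := hf1 w1; rewrite in_setD1 => /andP [h _].
    + move: hx; rewrite negbK => /eqP hx.
      by have := hf1 w2; rewrite in_setD1 eq_sym => /andP [h _].
    + move: hx hy; rewrite !negbK => /eqP hx /eqP hy.
      by move: pxy; rewrite hx hy eqxx.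
Qed.

Lemma card3_disj (T : finType) (A B D : {set T}) :
  A :&: B = set0 -> A :&: D = set0 -> B :&: D = set0 ->
  #|A :|: B :|: D| = #|A| + #|B| + #|D|.
Proof.
move=> hAB hAD hBD.
have h1 := cardsUI A B; have h2 := cardsUI (A :|: B) D.
rewrite setIUl hAD hBD setU0 cards0 in h2.
rewrite hAB cards0 in h1. lia.
Qed.

Arguments card3_disj {T A B D}.

Lemma card0_sub (T : finType) (A B : {set T}) : A \subset B -> B = set0 -> A = set0.
Proof. move=> hs hB; apply/eqP; rewrite -subset0 -hB //. Qed.

Theorem lemma30 (k n : nat) (V : finType) (p : V -> 'I_k)
  (C : finType) (L : V -> {set C})
  (hk : 1 <= k) (hn : 2 * k + 2 <= n) (hV : #|V| = n)
  (hsurj : forall i : 'I_k, exists v, p v = i)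
  (hL : forall v, ceil3 (n + k - 1) <= #|L v|)
  (hnocol : ~ exists f : V -> C, Lcoloring (kpart_adj p) L f)
  (hunion : #|\bigcup_(v in V) L v| <= n - 1)
  (hmin : forall (W : finType) (e : rel W), #|W| < n ->
     choosable e (maxn (chi e) (ceil3 (#|W| + chi e - 1))))
  (a : 'I_k) (hA : #|partset p a| = 3) :
  3 * kcount p 3 + (kcount p 1 + kcount p 4) <= 3 * #|LA p L a|.
Proof.
pose S i := [set j : 'I_k | #|partset p j| == i].
have Sdisj : forall i j, i != j -> S i :&: S j = set0.
  move=> i j hij; apply/setP => t; rewrite !inE.
  apply/negP => /andP [/eqP h1 /eqP h2]; move: hij; by rewrite -h1 -h2 eqxx.
have hkc : kcount p 1 + kcount p 3 + kcount p 4 <= k.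
  rewrite /kcount -(card3_disj (Sdisj 1 3 isT) (Sdisj 1 4 isT) (Sdisj 3 4 isT)).
  by rewrite -[X in _ <= X]card_ord max_card.
have hk3 : 1 <= kcount p 3.
  rewrite /kcount (cardsD1 a) inE hA eqxx. lia.
have [x hx] : exists x, x \in partset p a.
  apply/set0Pn; rewrite -card_gt0 hA //.
have [y [z [hyz hAx]]] : exists y z, y != z /\ partset p a :\ x = [set y; z].
  apply/cards2P; move: hA; rewrite (cardsD1 x) hx. lia.
have hAe : partset p a = [set x; y; z].
  by rewrite -(setD1K hx) hAx setUA.
have hxy : x != y by move: (setD11 x (partset p a)); rewrite hAx !inE => /negbT; rewrite negb_or => /andP [h _].
have hxz : x != z by move: (setD11 x (partset p a)); rewrite hAx !inE => /negbT; rewrite negb_or => /andP [_ h].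
have inA : forall v, (v \in partset p a) = (p v == a) by move=> v; rewrite inE.
have hT : forall c, c \in L x -> c \in L y -> c \in L z -> False.
  move=> c cx cy cz.
  apply: (@no_triple k n V p C L hk hn hV hL hnocol hmin a hA c) => v hv.
  have : v \in partset p a by rewrite inA hv.
  by rewrite hAe !inE => /orP [/orP [] |] /eqP ->.
have hyA : y \in partset p a by rewrite hAe !inE eqxx orbT.
have hzA : z \in partset p a by rewrite hAe !inE eqxx orbT.
set s := kcount p 1 + kcount p 4.
have memLA : forall u v, u \in partset p a -> v \in partset p a -> u != v ->
    s + 1 <= 3 * #|L u :&: L v| -> L u :&: L v \subset LA p L a.
  move=> u v hu hv huv hs; apply/subsetP => c hc; rewrite inE.
  apply/existsP; exists u; apply/existsP; exists v.
  rewrite hu hv hc andbT /= /good_pair huv /=.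
  move: hu hv; rewrite !inA => /eqP hu /eqP hv.
  by rewrite hu hv eqxx hA /= -/s hs.
pose J u v := if s + 1 <= 3 * #|L u :&: L v| then L u :&: L v else set0.
have JLA : forall u v, u \in partset p a -> v \in partset p a -> u != v ->
    J u v \subset LA p L a.
  move=> u v hu hv huv; rewrite /J; case: ifP => h; last exact: sub0set.
  exact: memLA.
have JI : forall u v, J u v \subset L u :&: L v.
  by move=> u v; rewrite /J; case: ifP => _; rewrite ?sub0set.
have Jc : forall u v, #|J u v| = if s + 1 <= 3 * #|L u :&: L v| then #|L u :&: L v| else 0.
  by move=> u v; rewrite /J; case: ifP => _; rewrite ?cards0.
have T0 : forall B1 B2 : {set C}, B1 \subset L x -> B1 \subset L y -> B1 \subset L z
   -> B1 = B2 -> B1 = set0.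
  move=> B1 B2 h1 h2 h3 _; apply/setP => c; rewrite inE.
  apply/negP => hc; apply: (hT c); [exact: (subsetP h1) | exact: (subsetP h2) | exact: (subsetP h3)].
have Idisj : forall u1 v1 u2 v2 : V, [set u1; v1; u2; v2] = [set x; y; z] ->
   (L u1 :&: L v1) :&: (L u2 :&: L v2) = set0.
  move=> u1 v1 u2 v2 heq; apply/setP => c; rewrite !inE.
  apply/negP => /andP [/andP [c1 c2] /andP [c3 c4]].
  have hall : forall w, w \in [set x; y; z] -> c \in L w.
    move=> w; rewrite -heq !inE => /orP [/orP [/orP [] |] |] /eqP -> //.
  by apply: (hT c); apply: hall; rewrite !inE eqxx ?orbT.
have hxyz1 : [set x; y; x; z] = [set x; y; z].
  by apply/setP => w; rewrite !inE; case: (w == x); case: (w == y); case: (w == z).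
have hxyz2 : [set x; y; y; z] = [set x; y; z].
  by apply/setP => w; rewrite !inE; case: (w == x); case: (w == y); case: (w == z).
have hxyz3 : [set x; z; y; z] = [set x; y; z].
  by apply/setP => w; rewrite !inE; case: (w == x); case: (w == y); case: (w == z).
have hJdisj : forall u1 v1 u2 v2 : V, [set u1; v1; u2; v2] = [set x; y; z] ->
   J u1 v1 :&: J u2 v2 = set0.
  move=> u1 v1 u2 v2 heq; apply: card0_sub (Idisj _ _ _ _ heq).
  exact: setISS.
have hJU := card3_disj (hJdisj _ _ _ _ hxyz1) (hJdisj _ _ _ _ hxyz2) (hJdisj _ _ _ _ hxyz3).
have hLA : #|J x y :|: J x z :|: J y z| <= #|LA p L a|.
  apply: subset_leq_card; rewrite !subUset (JLA _ _ hx hyA hxy) (JLA _ _ hx hzA hxz).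
  by rewrite (JLA _ _ hyA hzA hyz).
rewrite hJU !Jc in hLA.
have hU : #|L x :|: L y :|: L z| <= n - 1.
  apply: leq_trans hunion; apply: subset_leq_card; rewrite !subUset.
  by rewrite !(bigcup_sup _ (isT : true)).
have hUc : #|L x :|: L y :|: L z| + #|L x :&: L y| + #|L x :&: L z| + #|L y :&: L z|
   = #|L x| + #|L y| + #|L z|.
  have h1 := cardsUI (L x) (L y); have h2 := cardsUI (L x :|: L y) (L z).
  rewrite setIUl in h2.
  have h3 := cardsUI (L x :&: L z) (L y :&: L z).
  rewrite (Idisj _ _ _ _ hxyz3) cards0 in h3.
  lia.
have := hL x; have := hL y; have := hL z; rewrite /ceil3 => lz ly lx.
move: hLA; case: ifP => h1; case: ifP => h2; case: ifP => h3 => hLA; lia.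
Qed.
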